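(* Let $N\geq 1$, let $\mathbb{A},\widetilde{\mathbb{A}}$ be real antisymmetric $N\times N$ matrices and $\mathbb{D}$ a real diagonal $N\times N$ matrix, and let $A$ be the $2N\times 2N$ complex antisymmetric matrix $$A=P^T\begin{pmatrix}\mathbb{A} & i\mathbb{D}\\ -i\mathbb{D} & \widetilde{\mathbb{A}}\end{pmatrix}P,$$ where $P$ is the permutation matrix with $P(x_1,y_1,x_2,y_2,\dots,x_N,y_N)^T=(x_1,\dots,x_N,y_1,\dots,y_N)^T$. Assume $A$ is diagonalizable and has no zero eigenvalue, and write its eigenvalues as $\pm\beta_1,\dots,\pm\beta_N$, where each $\beta_k$ is chosen with $\mathrm{Re}\,\beta_k\geq 0$, and with $\mathrm{Im}\,\beta_k>0$ whenever $\mathrm{Re}\,\beta_k=0$. Let $|\mathfrak{I}|$ be the number of $k$ with $\beta_k$ purely imaginary. Let $O$ be a complex orthogonal $2N\times 2N$ matrix ($OO^T=O^TO=\mathbb{1}$) with $A=O^TBO$, where $B$ is block diagonal with $2\times 2$ blocks $\begin{pmatrix}0&-i\beta_k\\ i\beta_k&0\end{pmatrix}$, $k=1,\dots,N$. Let $c_1,\tilde c_1,\dots,c_N,\tilde c_N$ be Hermitian operators on a Hilbert space satisfying $\{c_i,c_j\}=\{\tilde c_i,\tilde c_j\}=2\delta_{ij}$, $\{c_i,\tilde c_j\}=0$; set $\vec c=(c_1,\tilde c_1,\dots,c_N,\tilde c_N)^T$, $\vec a=(a_1,\dots,a_{2N})^T=O\vec c$, and define $(-1)^{\mathcal{N}_f}=\prod_{j=1}^N(-i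 c_j\tilde c_j)$ and $(-1)^{\mathcal{N}_d}=\prod_{k=1}^N(-i a_{2k-1}a_{2k})$. Fix an integer $m\geq 0$ (in the paper $m=|\mathfrak{U}|+|\mathfrak{V}|$, the number of intralayer plus interlayer gauge flips), and call a nonzero state $|\psi\rangle$ physical if $(-1)^{\mathcal{N}_f}|\psi\rangle=(-1)^m|\psi\rangle$. Then a nonzero state $|\bm{\nu}\rangle$ with $(-1)^{\mathcal{N}_d}|\bm{\nu}\rangle=(-1)^{\nu}|\bm{\nu}\rangle$ (where $\nu$ is the total number of occupied normal master modes) is physical if and only if $$(-1)^\nu=(\det O)\,(-1)^{m}.$$ Moreover, $\det O=\mathrm{sgn}\big((-i)^{|\mathfrak{I}|}\,\mathrm{Pf}(iA)\big)$, where $\mathrm{Pf}$ denotes the Pfaffian.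
   Context: This is the single-particle (third-quantization) description of a quadratic Majorana Lindbladian $\mathcal{L}=\tfrac14\vec c^{\,T}A\vec c-\sum_j\gamma_j$, with $\mathbb{A}_{ij}=4J_{ij}u_{ij}$, $\widetilde{\mathbb{A}}_{ij}=4J_{ij}\tilde u_{ij}$, $\mathbb{D}_{ij}=2\delta_{ij}\gamma_iv_i$ for classical $\mathbb{Z}_2$ gauge fields $u_{ij},\tilde u_{ij},v_i\in\{\pm1\}$. Normal master modes are $d'_k=\tfrac12(a_{2k-1}-ia_{2k})$, $d_k=\tfrac12(a_{2k-1}+ia_{2k})$, with eigenstates $|\bm\nu\rangle=\prod_k(d'_k)^{\nu_k}|\Omega\rangle$, $\nu_k\in\{0,1\}$, $\nu=\sum_k\nu_k$, where $|\Omega\rangle$ is annihilated by all $d_k$. Physicality means the adjoint-fermion parity $(-1)^{\mathcal{N}_f}$ equals the gauge parity, which in the sector with $|\mathfrak{U}|$ intralayer and $|\mathfrak{V}|$ interlayer gauge flips is $(-1)^{|\mathfrak{U}|+|\mathfrak{V}|}$. *)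

(* Defs.v *)
(* Scalars: an arbitrary numClosedFieldType C (e.g. complex R
   for a real closed field R, or algC); "real" means \is Num.real. *)
From HB Require Import structures.
From mathcomp Require Import all_boot all_order all_fingroup all_algebra.
Set Implicit Arguments. Unset Strict Implicit. Unset Printing Implicit Defensive.
Import Order.TTheory GRing.Theory Num.Theory.
Local Open Scope ring_scope.

Lemma half_ord_proof N (i : 'I_N.*2) : (i./2 < N)%N.
Proof. have := ltn_ord i; rewrite -{1}(odd_double_half i) => h.
by rewrite -ltn_double; apply: leq_ltn_trans h; apply: leq_addl. Qed.
Definition half_ord N (i : 'I_N.*2) : 'I_N := Ordinal (half_ord_proof i).

Lemma evn_proof N (k : 'I_N) : (k.*2 < N.*2)%N.
Proof. by rewrite ltn_double. Qed.
Lemma odn_proof N (k : 'I_N) : (k.*2.+1 < N.*2)%N.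
Proof. by rewrite -doubleS leq_double. Qed.
(* 0-based positions 2k and 2k+1, i.e. the paper's 1-based 2k-1 and 2k *)
Definition evn N (k : 'I_N) : 'I_N.*2 := Ordinal (evn_proof k).
Definition odn N (k : 'I_N) : 'I_N.*2 := Ordinal (odn_proof k).

(* sigma : block coordinates (x_1..x_N,y_1..y_N) -> interleaved (x_1,y_1,...) *)
Definition ilv N (a : 'I_(N + N)) : 'I_N.*2 :=
  match split a with inl k => evn k | inr k => odn k end.

Definition Pmx (C : nzRingType) N : 'M[C]_(N + N, N.*2) :=
  \matrix_(a, i) (i == ilv a)%:R.

Definition Amx (C : numClosedFieldType) N (AA AAt DD : 'M[C]_N) : 'M[C]_N.*2 :=
  (Pmx C N)^T *m block_mx AA ('i *: DD) (- ('i *: DD)) AAt *m Pmx C N.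

Definition Bmx (C : numClosedFieldType) N (b : 'I_N -> C) : 'M[C]_N.*2 :=
  \matrix_(i, j)
    if half_ord i == half_ord j then
      (if ~~ odd i && odd j then - ('i * b (half_ord i))
       else if odd i && ~~ odd j then 'i * b (half_ord i) else 0)
    else 0.

Definition pfaffian (C : fieldType) n (A : 'M[C]_n.*2) : C :=
  ((2 ^ n * n`!)%:R)^-1 *
  \sum_(s : 'S_n.*2) (-1) ^+ s * \prod_(k < n) A (s (evn k)) (s (odn k)).

Definition oprod (C : nzRingType) (V : lmodType C) N (F : 'I_N -> V -> V) : V -> V :=
  foldr (fun k g => F k \o g) id (enum 'I_N).

Definition cvec (C : nzRingType) (V : lmodType C) N (c ct : 'I_N -> V -> V)
  (i : 'I_N.*2) : V -> V :=
  if odd i then ct (half_ord i) else c (half_ord i).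

Definition avec (C : nzRingType) (V : lmodType C) N (O : 'M[C]_N.*2)
  (c ct : 'I_N -> V -> V) (k : 'I_N.*2) : V -> V :=
  fun v => \sum_(j < N.*2) O k j *: cvec c ct j v.

Definition parity_f (C : numClosedFieldType) (V : lmodType C) N
  (c ct : 'I_N -> V -> V) : V -> V :=
  oprod (fun j v => (- 'i) *: c j (ct j v)).

Definition parity_d (C : numClosedFieldType) (V : lmodType C) N (O : 'M[C]_N.*2)
  (c ct : 'I_N -> V -> V) : V -> V :=
  oprod (fun k v => (- 'i) *: avec O c ct (evn k) (avec O c ct (odn k) v)).

Definition physical (C : numClosedFieldType) (V : lmodType C) N
  (c ct : 'I_N -> V -> V) (m : nat) (psi : V) : Prop :=
  psi != 0 /\ parity_f c ct psi = (-1) ^+ m *: psi.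

(* Main.v *)
Require Import Defs.
From HB Require Import structures.
From mathcomp Require Import all_boot all_order all_fingroup all_algebra.
From mathcomp Require Import ring.
From Stdlib Require Import FunctionalExtensionality ProofIrrelevance.
Set Implicit Arguments. Unset Strict Implicit. Unset Printing Implicit Defensive.
Import Order.TTheory GRing.Theory Num.Theory.
Local Open Scope ring_scope.

Section Lin.
Variables (R : numFieldType) (V : lmodType R).

Definition lin_prop (f : V -> V) := forall a u v, f (a *: u + v) = a *: f u + f v.

Record Lin := mkLin { lfun :> V -> V; lfunP : lin_prop lfun }.

Lemma lin_ext (f g : Lin) : (forall v, f v = g v) -> f = g.
Proof.
case: f g => f fP [g gP] /= E.
have efg : f = g by apply: functional_extensionality.
subst g; congr mkLin; apply: proof_irrelevance.
Qed.

Lemma linD (f : Lin) u v : f (u + v) = f u + f v.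
Proof. by have := lfunP f 1 u v; rewrite !scale1r. Qed.
Lemma lin0 (f : Lin) : f 0 = 0.
Proof. have := linD f 0 0; rewrite addr0 => h; by apply: (addrI (f 0)); rewrite addr0 -h. Qed.
Lemma linZ (f : Lin) a u : f (a *: u) = a *: f u.
Proof. by rewrite -[a *: u]addr0 lfunP lin0 addr0. Qed.
Lemma linN (f : Lin) u : f (- u) = - f u.
Proof. by rewrite -scaleN1r linZ scaleN1r. Qed.
Lemma lin_sum (f : Lin) I (r : seq I) (P : pred I) (F : I -> V) :
  f (\sum_(i <- r | P i) F i) = \sum_(i <- r | P i) f (F i).
Proof. by apply: (big_morph f (linD f) (lin0 f)). Qed.

Fact lcomp_proof (f g : Lin) : lin_prop (f \o g).
Proof. by move=> a u v /=; rewrite !lfunP. Qed.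
Definition lcomp f g := mkLin (lcomp_proof f g).
Fact lid_proof : lin_prop id. Proof. by []. Qed.
Definition lid := mkLin lid_proof.
Fact lzero_proof : lin_prop (fun _ => 0). Proof. by move=> a u v; rewrite scaler0 addr0. Qed.
Definition lzero := mkLin lzero_proof.
Fact ladd_proof (f g : Lin) : lin_prop (fun v => f v + g v).
Proof. by move=> a u v; rewrite !lfunP scalerDr addrACA. Qed.
Definition ladd f g := mkLin (ladd_proof f g).
Fact lscale_proof k (f : Lin) : lin_prop (fun v => k *: f v).
Proof. by move=> a u v; rewrite lfunP scalerDr !scalerA mulrC. Qed.
Definition lscale k f := mkLin (lscale_proof k f).

Lemma lcompA : associative lcomp. Proof. by move=> f g h; apply: lin_ext. Qed.
Lemma lid_l : left_id lid lcomp. Proof. by move=> f; apply: lin_ext. Qed.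
Lemma lid_r : right_id lid lcomp. Proof. by move=> f; apply: lin_ext. Qed.
Lemma laddA : associative ladd. Proof. by move=> f g h; apply: lin_ext => v /=; rewrite addrA. Qed.
Lemma laddC : commutative ladd. Proof. by move=> f g; apply: lin_ext => v /=; rewrite addrC. Qed.
Lemma lzero_l : left_id lzero ladd. Proof. by move=> f; apply: lin_ext => v /=; rewrite add0r. Qed.
Lemma lzero_cl : left_zero lzero lcomp. Proof. by move=> f; apply: lin_ext. Qed.
Lemma lzero_cr : right_zero lzero lcomp. Proof. by move=> f; apply: lin_ext => v /=; rewrite lin0. Qed.
Lemma lcompDl : left_distributive lcomp ladd. Proof. by move=> f g h; apply: lin_ext. Qed.
Lemma lcompDr : right_distributive lcomp ladd.
Proof. by move=> f g h; apply: lin_ext => v /=; rewrite linD. Qed.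

HB.instance Definition _ := Monoid.isLaw.Build Lin lid lcomp lcompA lid_l lid_r.
HB.instance Definition _ := Monoid.isComLaw.Build Lin lzero ladd laddA laddC lzero_l.
HB.instance Definition _ := Monoid.isMulLaw.Build Lin lzero lcomp lzero_cl lzero_cr.
HB.instance Definition _ := Monoid.isAddLaw.Build Lin lcomp ladd lcompDl lcompDr.

Lemma lsum_app I (r : seq I) (P : pred I) (F : I -> Lin) v :
  (\big[ladd/lzero]_(i <- r | P i) F i) v = \sum_(i <- r | P i) F i v.
Proof. by elim/big_rec2: _ => //= i f y _ <-. Qed.

Lemma lprod_scale I (r : seq I) (k : I -> R) (F : I -> Lin) :
  \big[lcomp/lid]_(i <- r) lscale (k i) (F i) =
  lscale (\prod_(i <- r) k i) (\big[lcomp/lid]_(i <- r) F i).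
Proof.
elim: r => [|i r IH]; first by rewrite !big_nil; apply: lin_ext => v /=; rewrite scale1r.
rewrite !big_cons IH; apply: lin_ext => v /=; by rewrite linZ scalerA.
Qed.

End Lin.
Arguments lcomp {R V}. Arguments ladd {R V}. Arguments lid {R V}. Arguments lzero {R V}. Arguments lscale {R V}.


Section Sign.
Variables (R : numFieldType) (V : lmodType R).
Local Notation Lin := (Lin V).

Lemma lcomp_scalel a (f g : Lin) : lcomp (lscale a f) g = lscale a (lcomp f g).
Proof. by apply: lin_ext. Qed.
Lemma lcomp_scaler a (f g : Lin) : lcomp f (lscale a g) = lscale a (lcomp f g).
Proof. by apply: lin_ext => v /=; rewrite linZ. Qed.
Lemma lscaleA a b (f : Lin) : lscale a (lscale b f) = lscale (a * b) f.
Proof. by apply: lin_ext => v /=; rewrite scalerA. Qed.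
Lemma lscale1 (f : Lin) : lscale 1 f = f.
Proof. by apply: lin_ext => v /=; rewrite scale1r. Qed.

Definition Eseq I (e : I -> Lin) (l : seq I) := \big[lcomp/lid]_(i <- l) e i.

Variables (I : eqType) (e : I -> Lin).
Hypothesis hanti : forall i j, i != j -> lcomp (e i) (e j) = lscale (-1) (lcomp (e j) (e i)).

Lemma comm_past x m : x \notin m ->
  lcomp (e x) (Eseq e m) = lscale ((-1) ^+ size m) (lcomp (Eseq e m) (e x)).
Proof.
elim: m => [|y m IH] /=.
  by rewrite /Eseq big_nil expr0 lscale1 lid_l lid_r.
rewrite in_cons negb_or => /andP[xy xm].
rewrite /Eseq big_cons -/(Eseq e m) lcompA hanti // lcomp_scalel -lcompA IH //.
by rewrite lcomp_scaler lscaleA lcompA exprS.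
Qed.

Lemma swap2 x y m b : x != y -> x \notin m -> y \notin m ->
  Eseq e (y :: m ++ x :: b) = lscale (-1) (Eseq e (x :: m ++ y :: b)).
Proof.
move=> xy xm ym.
rewrite /Eseq !big_cons !big_cat !big_cons -/(Eseq e m) -/(Eseq e b).
rewrite !lcompA comm_past // !lcomp_scalel -!lcompA (lcompA (e y)) hanti 1?eq_sym //.
rewrite !lcomp_scalel !lcomp_scaler !lscaleA !lcompA -(lcompA (Eseq e m)) .
rewrite (comm_past xm) !lcomp_scalel lscaleA mulrC; congr lscale.
by rewrite !lcompA.
Qed.
End Sign.

Section Sign2.
Variables (R : numFieldType) (V : lmodType R).
Local Notation Lin := (Lin V).
Variables (I : finType) (e : I -> Lin).
Hypothesis hanti : forall i j, i != j -> lcomp (e i) (e j) = lscale (-1) (lcomp (e j) (e i)).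

Lemma map_tperm_id x y (s : seq I) : x \notin s -> y \notin s -> map (tperm x y) s = s.
Proof.
move=> xs ys; rewrite -[RHS]map_id; apply/eq_in_map => z zs.
by rewrite tpermD //; [apply: contraNneq xs => -> | apply: contraNneq ys => ->].
Qed.

Lemma uniq_notin (L1 L2 : seq I) z : uniq (L1 ++ z :: L2) -> z \notin L1 /\ z \notin L2.
Proof.
rewrite cat_uniq => /and3P[_ h /andP[zL2 _]]; split => //.
by apply: contra h => zL1; apply/hasP; exists z; rewrite ?in_cons ?eqxx.
Qed.

Lemma swap_tperm x y (l : seq I) : uniq l -> x != y -> x \in l -> y \in l ->
  Eseq e (map (tperm x y) l) = lscale (-1) (Eseq e l).
Proof.
move=> ul xy xl yl; case/splitPr: xl ul yl => a r.
rewrite mem_cat in_cons [y == x]eq_sym (negbTE xy) /= => ul /orP[ya|yr].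
- case/splitPr: ya ul => a1 m; rewrite -catA /= => ul.
  have [ya1 ymr] := uniq_notin ul.
  have ul' := ul; rewrite -cat_cons catA in ul'.
  have [xa1m xr] := uniq_notin ul'.
  move: ymr xa1m; rewrite !mem_cat !in_cons !negb_or (eq_sym x).
  move=> /and3P[ym _ yr] /and3P[xa1 _ xm].
  rewrite map_cat /= map_cat /= tpermL tpermR !map_tperm_id //.
  rewrite /Eseq [in LHS]big_cat [in RHS]big_cat /= -/(Eseq e (x :: m ++ y :: r)).
  by rewrite -/(Eseq e (y :: m ++ x :: r)) (swap2 hanti) ?(eq_sym y) // lcomp_scaler.
- case/splitPr: yr ul => m b ul.
  have [xa xmb] := uniq_notin ul.
  have ul' := ul; rewrite -cat_cons catA in ul'.
  have [yaxm yb] := uniq_notin ul'.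
  move: xmb yaxm; rewrite !mem_cat in_cons !negb_or => /and3P[xm _ xb] /and3P[ya _ ym].
  rewrite map_cat /= map_cat /= tpermL tpermR !map_tperm_id //.
  rewrite /Eseq [in LHS]big_cat [in RHS]big_cat /= -/(Eseq e (y :: m ++ x :: b)).
  by rewrite (swap2 hanti) // lcomp_scaler.
Qed.
End Sign2.

Section Sign3.
Variables (R : numFieldType) (V : lmodType R).
Local Notation Lin := (Lin V).

Lemma Eseq_perm (I : finType) (e : I -> Lin)
  (hanti : forall i j, i != j -> lcomp (e i) (e j) = lscale (-1) (lcomp (e j) (e i)))
  (s : {perm I}) :
  Eseq (fun i => e (s i)) (index_enum I) = lscale ((-1) ^+ s) (Eseq e (index_enum I)).
Proof.
have [ts -> dts] := prod_tpermP s.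
elim: ts dts => [|t ts IH] /=.
  move=> _; rewrite big_nil odd_perm1 expr0 lscale1 /Eseq.
  by apply: eq_bigr => i _; rewrite perm1.
case/andP=> dt dts; rewrite big_cons.
set s' := (\prod_(t0 <- ts) tperm t0.1 t0.2)%g.
have -> : Eseq (fun i => e ((tperm t.1 t.2 * s')%g i)) (index_enum I) =
          Eseq (fun i => e (s' i)) (map (tperm t.1 t.2) (index_enum I)).
  by rewrite /Eseq big_map; apply: eq_bigr => i _; rewrite permM.
rewrite (swap_tperm (e := fun i => e (s' i))) ?index_enum_uniq ?mem_index_enum //; last first.
  by move=> i j ij; apply: hanti; rewrite (inj_eq perm_inj).
rewrite IH // odd_mul_tperm dt lscaleA; congr lscale.
by rewrite /s' signr_addb expr1.
Qed.
End Sign3.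

Section DetSum.
Variables (R : comNzRingType) (W : lmodType R).

Lemma sum_ffun_det n (X : 'M[R]_n) (G : {ffun 'I_n -> 'I_n} -> W) :
  \sum_(f : {ffun 'I_n -> 'I_n}) \det (\matrix_(i, j) X (f i) j) *: G f =
  \sum_(t : 'S_n) ((-1) ^+ t * \det X) *: G (pval t).
Proof.
rewrite (bigID (fun f : {ffun 'I_n -> 'I_n} => injectiveb f)) /= addrC big1 ?add0r => [|f Uf].
  rewrite (reindex (@pval _)) /=; last first.
    pose in_Sn := insubd (1%g : 'S_n).
    by exists in_Sn => /= f Uf; first apply: val_inj; apply: insubdK.
  apply: eq_big => /= [s | s _]; rewrite ?(valP s) //.
  congr (_ *: _).
  have -> : \matrix_(i, j) X (pval s i) j = row_perm s X.
    by apply/matrixP => i j; rewrite !mxE pvalE.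
  by rewrite row_permE det_mulmx det_perm.
case/injectivePn: Uf => i1 [i2 Di12 Ef12].
by rewrite (determinant_alternate Di12) ?scale0r //= => j; rewrite !mxE Ef12.
Qed.
End DetSum.

Section Main1.
Variables (R : numFieldType) (V : lmodType R).
Local Notation Lin := (Lin V).
Variables (n : nat) (c : 'I_n -> Lin).
Hypothesis hc : forall i j v, c i (c j v) + c j (c i v) = (2 * (i == j)%:R) *: v.
Variable (O : 'M[R]_n).
Hypothesis hO : O *m O^T = 1%:M.

Definition aop i : Lin := \big[ladd/lzero]_(j : 'I_n) lscale (O i j) (c j).

Lemma aop_app i v : aop i v = \sum_j O i j *: c j v.
Proof. by rewrite /aop lsum_app. Qed.

Lemma anti_of (e : 'I_n -> Lin) :
  (forall i j v, i != j -> e i (e j v) + e j (e i v) = 0) ->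
  forall i j, i != j -> lcomp (e i) (e j) = lscale (-1) (lcomp (e j) (e i)).
Proof.
move=> h i j ij; apply: lin_ext => v /=; rewrite scaleN1r.
by apply/eqP; rewrite -addr_eq0 h.
Qed.

Lemma c_anti i j v : i != j -> c i (c j v) + c j (c i v) = 0.
Proof. by move=> ij; rewrite hc (negbTE ij) mulr0 scale0r. Qed.

Lemma a_anti i j v : i != j -> aop i (aop j v) + aop j (aop i v) = 0.
Proof.
move=> ij.
have E : forall k l, aop k (aop l v) =
   \sum_p \sum_q (O k p * O l q) *: c p (c q v).
  move=> k l; rewrite aop_app; apply: eq_bigr => p _.
  rewrite aop_app lin_sum scaler_sumr; apply: eq_bigr => q _.
  by rewrite linZ scalerA.
rewrite !E [X in _ + X]exchange_big /= -big_split /=.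
have -> : \sum_p (\sum_q (O i p * O j q) *: c p (c q v) + \sum_q (O j q * O i p) *: c q (c p v))
   = \sum_p (O i p * O j p * 2) *: v.
  apply: eq_bigr => p _; rewrite -big_split /=.
  rewrite (bigD1 p) //= big1 ?addr0; last first.
    move=> q qp; rewrite (mulrC (O j q)) -scalerDr hc.
    by rewrite eq_sym (negbTE qp) mulr0 scale0r scaler0.
  by rewrite (mulrC (O j p)) -scalerDr hc eqxx mulr1 scalerA.
rewrite -scaler_suml -mulr_suml.
have -> : \sum_p O i p * O j p = (O *m O^T) i j by rewrite !mxE; apply: eq_bigr => p _; rewrite mxE.
by rewrite hO mxE (negbTE ij) mul0r scale0r.
Qed.

Let E (e : 'I_n -> Lin) := Eseq e (index_enum 'I_n).

Lemma expand_a (s : 'S_n) v :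
  Eseq (fun i => aop (s i)) (index_enum 'I_n) v =
  \sum_(f : {ffun 'I_n -> 'I_n}) (\prod_i O (s i) (f i)) *: Eseq (fun i => c (f i)) (index_enum 'I_n) v.
Proof.
rewrite /Eseq /aop.
rewrite (bigA_distr_bigA (fun i j => lscale (O (s i) j) (c j))) lsum_app.
by apply: eq_bigr => f _; rewrite lprod_scale.
Qed.

Lemma clifford_det v : E aop v = \det O *: E c v.
Proof.
have hfact : (n`!)%:R != 0 :> R by rewrite pnatr_eq0 -lt0n fact_gt0.
apply: (scalerI hfact).
have L : (n`!)%:R *: E aop v = \sum_(s : 'S_n) (-1) ^+ s *: Eseq (fun i => aop (s i)) (index_enum 'I_n) v.
  transitivity (\sum_(s : 'S_n) E aop v).
    by rewrite sumr_const card_Sn scaler_nat.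
  apply: eq_bigr => s _; rewrite Eseq_perm; last exact: anti_of a_anti.
  by rewrite /= scalerA -expr2 sqrr_sign scale1r.
rewrite L.
under eq_bigr do rewrite expand_a scaler_sumr.
rewrite exchange_big /=.
transitivity (\sum_(f : {ffun 'I_n -> 'I_n}) \det (\matrix_(i, j) O^T (f i) j) *: Eseq (fun i => c (f i)) (index_enum 'I_n) v).
  apply: eq_bigr => f _; rewrite /(\det _) scaler_suml; apply: eq_bigr => s _.
  rewrite scalerA; congr (_ * _ *: _); apply: eq_bigr => i _; by rewrite !mxE.
rewrite sum_ffun_det det_tr.
transitivity (\sum_(t : 'S_n) \det O *: E c v).
  apply: eq_bigr => t _.
  have -> : Eseq (fun i => c (pval t i)) (index_enum 'I_n) = Eseq (fun i => c (t i)) (index_enum 'I_n).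
    by rewrite /Eseq; apply: eq_bigr => i _; rewrite pvalE.
  rewrite Eseq_perm; last exact: anti_of c_anti.
  by rewrite /= scalerA mulrC mulrA -expr2 sqrr_sign mul1r.
by rewrite sumr_const card_Sn scaler_nat scalerMnl.
Qed.
End Main1.

Lemma index_enumE (T : finType) : index_enum T = enum T.
Proof. by rewrite [index_enum T]unlock enumT. Qed.

Lemma iota_pairs N : iota 0 N.*2 = flatten [seq [:: k.*2; k.*2.+1] | k <- iota 0 N].
Proof.
elim: N => // N IH.
have -> : iota 0 N.+1.*2 = iota 0 N.*2 ++ [:: N.*2; N.*2.+1] by rewrite doubleS -addn2 iotaD.
have -> : iota 0 N.+1 = iota 0 N ++ [:: N] by rewrite -addn1 iotaD.
by rewrite map_cat flatten_cat IH. 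
Qed.

Lemma enum_pairs N :
  flatten [seq [:: evn k; odn k] | k <- enum 'I_N] = index_enum 'I_N.*2.
Proof.
apply: (inj_map val_inj); rewrite index_enumE val_enum_ord iota_pairs -val_enum_ord.
elim: (enum 'I_N) => //= k l IH; by rewrite IH.
Qed.

Section Glue.
Variables (C : numClosedFieldType) (V : lmodType C) (N : nat).

Lemma oprod_pairs (e : 'I_N.*2 -> Lin V) (k0 : C) (F : 'I_N -> V -> V)
  (hF : forall k v, F k v = k0 *: e (evn k) (e (odn k) v)) (l : seq 'I_N) v :
  foldr (fun k g => F k \o g) id l v =
  k0 ^+ size l *: Eseq e (flatten [seq [:: evn k; odn k] | k <- l]) v.
Proof.
elim: l => [|k l IH] /=; first by rewrite /Eseq big_nil scale1r.
rewrite hF IH /Eseq !big_cons /= !linZ scalerA exprS.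
by [].
Qed.

Lemma oprod_E (e : 'I_N.*2 -> Lin V) (k0 : C) (F : 'I_N -> V -> V)
  (hF : forall k v, F k v = k0 *: e (evn k) (e (odn k) v)) v :
  oprod F v = k0 ^+ N *: Eseq e (index_enum 'I_N.*2) v.
Proof. by rewrite /oprod (oprod_pairs hF) size_enum_ord enum_pairs. Qed.

Lemma half_evn (k : 'I_N) : half_ord (evn k) = k.
Proof. by apply: val_inj; rewrite /= doubleK. Qed.
Lemma half_odn (k : 'I_N) : half_ord (odn k) = k.
Proof. by apply: val_inj => /=; exact: (half_bit_double k true). Qed.
End Glue.

Section Part1.
Variables (C : numClosedFieldType) (V : lmodType C) (N : nat).
Variables (c ct : 'I_N -> V -> V).
Hypotheses (hc_lin : forall j, linear (c j)) (hct_lin : forall j, linear (ct j)).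
Hypothesis hcc : forall i j v, c i (c j v) + c j (c i v) = (2 * (i == j)%:R) *: v.
Hypothesis hctct : forall i j v, ct i (ct j v) + ct j (ct i v) = (2 * (i == j)%:R) *: v.
Hypothesis hcct : forall i j v, c i (ct j v) + ct j (c i v) = 0.

Lemma cvec_lin i : lin_prop (cvec c ct i).
Proof. by rewrite /cvec; case: (odd i) => a u v; [apply: hct_lin | apply: hc_lin]. Qed.
Definition cvL i : Lin V := mkLin (cvec_lin i).

Lemma eq_half (i j : 'I_N.*2) : odd i = odd j -> (half_ord i == half_ord j) = (i == j).
Proof.
move=> hij; apply/eqP/eqP => [h|->//]; apply: val_inj; change (nat_of_ord i = nat_of_ord j).
rewrite -(odd_double_half i) -(odd_double_half j) hij.
by have /= -> := congr1 val h.
Qed.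

Lemma cv_rel i j v : cvL i (cvL j v) + cvL j (cvL i v) = (2 * (i == j)%:R) *: v.
Proof.
rewrite /= /cvec.
have ne : odd i != odd j -> i != j by apply: contraNneq => ->.
case oi: (odd i); case oj: (odd j).
- by rewrite hctct eq_half ?oi ?oj.
- rewrite addrC hcct (negbTE (ne _)) ?oi ?oj // mulr0 scale0r //.
- rewrite hcct (negbTE (ne _)) ?oi ?oj // mulr0 scale0r //.
- by rewrite hcc eq_half ?oi ?oj.
Qed.

Lemma parity_f_E v : parity_f c ct v = (- 'i) ^+ N *: Eseq cvL (index_enum 'I_N.*2) v.
Proof.
apply: oprod_E => k u /=; rewrite /cvec /= odd_double /=.
by rewrite half_evn half_odn.
Qed.

Lemma parity_d_E (O : 'M[C]_N.*2) v :
  parity_d O c ct v = (- 'i) ^+ N *: Eseq (aop cvL O) (index_enum 'I_N.*2) v.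
Proof.
apply: oprod_E => k u /=.
by rewrite aop_app /avec; congr (_ *: _); apply: eq_bigr => j _; rewrite aop_app.
Qed.

Lemma part1 (O : 'M[C]_N.*2) (hO1 : O *m O^T = 1%:M) (m nu : nat) (psi : V) :
  psi != 0 -> parity_d O c ct psi = (-1) ^+ nu *: psi ->
  (physical c ct m psi <-> (-1) ^+ nu = \det O * (-1) ^+ m).
Proof.
move=> psi0 hd.
have dd : \det O * \det O = 1.
  by have := congr1 determinant hO1; rewrite det_mulmx det_tr det1.
have hdf : parity_d O c ct psi = \det O *: parity_f c ct psi.
  rewrite parity_d_E parity_f_E (clifford_det cv_rel hO1).
  by rewrite !scalerA mulrC.
have hf : parity_f c ct psi = (\det O * (-1) ^+ nu) *: psi.
  by rewrite -scalerA -hd hdf scalerA dd scale1r.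
rewrite /physical hf; split.
- case=> _ h.
  have : (\det O * (-1) ^+ nu - (-1) ^+ m) *: psi = 0 by rewrite scalerBl h subrr.
  move/eqP; rewrite scaler_eq0 (negbTE psi0) orbF subr_eq0 => /eqP <-.
  by rewrite mulrA dd mul1r.
- move=> ->; split => //; by rewrite mulrA dd mul1r.
Qed.
End Part1.

Section Pf1.
Variables (R : comNzRingType) (n : nat).

Definition Tpf (X : 'M[R]_n.*2) : R :=
  \sum_(s : 'S_n.*2) (-1) ^+ s * \prod_(k < n) X (s (evn k)) (s (odn k)).

Lemma evn_half (i : 'I_n.*2) : ~~ odd i -> evn (half_ord i) = i.
Proof.
move=> oi; apply: val_inj; change ((i./2).*2 = nat_of_ord i).
by rewrite -{2}(odd_double_half i) (negbTE oi).
Qed.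
Lemma odn_half (i : 'I_n.*2) : odd i -> odn (half_ord i) = i.
Proof.
move=> oi; apply: val_inj; change ((i./2).*2.+1 = nat_of_ord i).
by rewrite -{2}(odd_double_half i) oi.
Qed.

Lemma prod_pairs (G : 'I_n.*2 -> R) :
  \prod_(i : 'I_n.*2) G i = \prod_(k < n) (G (evn k) * G (odn k)).
Proof.
rewrite -[in LHS]enum_pairs big_flatten /= big_map [in RHS]index_enumE.
by apply: eq_bigr => k _; rewrite !big_cons big_nil mulr1.
Qed.

Lemma sum_ffun_det_r m (X : 'M[R]_m) (G : {ffun 'I_m -> 'I_m} -> R) :
  \sum_(f : {ffun 'I_m -> 'I_m}) \det (\matrix_(i, j) X (f i) j) * G f =
  \sum_(t : 'S_m) ((-1) ^+ t * \det X) * G (pval t).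
Proof.
rewrite (bigID (fun f : {ffun 'I_m -> 'I_m} => injectiveb f)) /= addrC big1 ?add0r => [|f Uf].
  rewrite (reindex (@pval _)) /=; last first.
    pose in_Sn := insubd (1%g : 'S_m).
    by exists in_Sn => /= f Uf; first apply: val_inj; apply: insubdK.
  apply: eq_big => /= [s | s _]; rewrite ?(valP s) //.
  congr (_ * _).
  have -> : \matrix_(i, j) X (pval s i) j = row_perm s X.
    by apply/matrixP => i j; rewrite !mxE pvalE.
  by rewrite row_permE det_mulmx det_perm.
case/injectivePn: Uf => i1 [i2 Di12 Ef12].
by rewrite (determinant_alternate Di12) ?mul0r //= => j; rewrite !mxE Ef12.
Qed.

Lemma Tpf_congr (M X : 'M[R]_n.*2) : Tpf (M^T *m X *m M) = \det M * Tpf X.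
Proof.
rewrite /Tpf.
have E1 : forall s : 'S_n.*2, \prod_(k < n) (M^T *m X *m M) (s (evn k)) (s (odn k)) =
  \sum_(g : {ffun 'I_n -> 'I_n.*2 * 'I_n.*2}) \prod_(k < n)
     (M (g k).1 (s (evn k)) * X (g k).1 (g k).2 * M (g k).2 (s (odn k))).
  move=> s; rewrite -(bigA_distr_bigA (fun k (pq : 'I_n.*2 * 'I_n.*2) => M pq.1 (s (evn k)) * X pq.1 pq.2 * M pq.2 (s (odn k)))) /=; apply: eq_bigr => k _.
  rewrite mxE -(pair_bigA _ (fun p q => M p (s (evn k)) * X p q * M q (s (odn k)))) /=.
  rewrite exchange_big /=; apply: eq_bigr => p _; rewrite mxE big_distrl /=; apply: eq_bigr => q _.
  by rewrite !mxE.
pose gof (f : {ffun 'I_n.*2 -> 'I_n.*2}) : {ffun 'I_n -> 'I_n.*2 * 'I_n.*2} :=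
  [ffun k => (f (evn k), f (odn k))].
pose fog (g : {ffun 'I_n -> 'I_n.*2 * 'I_n.*2}) : {ffun 'I_n.*2 -> 'I_n.*2} :=
  [ffun i : 'I_n.*2 => if odd i then (g (half_ord i)).2 else (g (half_ord i)).1].
have bij : {on [pred g | true], bijective gof}.
  exists fog => [f _ | g _].
    apply/ffunP => i; rewrite !ffunE /=; case oi: (odd i).
      by rewrite odn_half ?oi.
    by rewrite evn_half ?oi.
  apply/ffunP => k; rewrite !ffunE /= odd_double /= half_evn half_odn.
  by case: (g k).
under eq_bigr do rewrite E1 (reindex gof bij) /= big_distrr /=.
rewrite exchange_big /=.
transitivity (\sum_(f : {ffun 'I_n.*2 -> 'I_n.*2})
   \det (\matrix_(i, j) M (f i) j) * \prod_(k < n) X (f (evn k)) (f (odn k))).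
  apply: eq_bigr => f _; rewrite /(\det _) big_distrl /=; apply: eq_bigr => s _.
  rewrite -mulrA; congr (_ * _).
  under eq_bigr do rewrite !ffunE /= mulrAC.
  rewrite big_split /= prod_pairs; congr (_ * _).
  by apply: eq_bigr => k _; rewrite !mxE.
rewrite sum_ffun_det_r mulr_sumr; apply: eq_bigr => t _.
rewrite (mulrC _ (\det M)) -mulrA; congr (_ * (_ * _)).
by apply: eq_bigr => k _; rewrite !pvalE.
Qed.
End Pf1.

Section Lift.
Variable n : nat.

Lemma evn_inj : injective (@evn n).
Proof. by move=> k l /(congr1 val) /= /double_inj kl; apply: val_inj. Qed.
Lemma odn_inj : injective (@odn n).
Proof. by move=> k l /(congr1 val) /= [] /double_inj kl; apply: val_inj. Qed.
Lemma odd_evn (k : 'I_n) : odd (evn k) = false.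
Proof. by rewrite /= odd_double. Qed.
Lemma odd_odn (k : 'I_n) : odd (odn k) = true.
Proof. by rewrite /= odd_double. Qed.
Lemma evn_odn (k l : 'I_n) : evn k != odn l.
Proof. by apply/eqP => /(congr1 (fun i : 'I_n.*2 => odd i)); rewrite odd_evn odd_odn. Qed.

Definition liftf (s : 'S_n) (i : 'I_n.*2) : 'I_n.*2 :=
  if odd i then odn (s (half_ord i)) else evn (s (half_ord i)).

Lemma liftf_inj s : injective (liftf s).
Proof.
move=> i j; rewrite /liftf; case oi: (odd i); case oj: (odd j) => h.
- move/odn_inj/perm_inj: h => h; apply/eqP; rewrite -eq_half ?oi ?oj //; exact/eqP.
- by move: (evn_odn (s (half_ord j)) (s (half_ord i))); rewrite h eqxx.
- by move: (evn_odn (s (half_ord i)) (s (half_ord j))); rewrite h eqxx.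
- move/evn_inj/perm_inj: h => h; apply/eqP; rewrite -eq_half ?oi ?oj //; exact/eqP.
Qed.

Definition Lift s : 'S_n.*2 := perm (@liftf_inj s).

Lemma LiftE s i : Lift s i = liftf s i. Proof. by rewrite permE. Qed.

Lemma LiftM s1 s2 : Lift (s1 * s2)%g = (Lift s1 * Lift s2)%g.
Proof.
apply/permP => i; rewrite permM !LiftE /liftf !permM.
by case oi: (odd i); rewrite ?odd_odn ?odd_evn ?half_odn ?half_evn.
Qed.

Lemma Lift1 : Lift 1%g = 1%g.
Proof.
apply/permP => i; rewrite LiftE /liftf !perm1.
by case oi: (odd i); [rewrite odn_half ?oi | rewrite evn_half ?oi].
Qed.

Lemma Lift_tperm a b :
  Lift (tperm a b) = (tperm (evn a) (evn b) * tperm (odn a) (odn b))%g.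
Proof.
apply/permP => i; rewrite LiftE /liftf permM.
case oi: (odd i).
- rewrite -[in RHS](odn_half oi) (tpermD (evn_odn _ _) (evn_odn _ _)).
  by rewrite -(inj_tperm _ _ _ odn_inj).
- rewrite -[in RHS](evn_half (negbT oi)) -(inj_tperm _ _ _ evn_inj).
  by rewrite [tperm (odn a) _ _]tpermD //; rewrite eq_sym evn_odn.
Qed.

Lemma odd_Lift s : odd_perm (Lift s) = false.
Proof.
have [ts -> _] := prod_tpermP s.
elim: ts => [|t ts IH]; first by rewrite big_nil Lift1 odd_perm1.
rewrite big_cons LiftM odd_permM IH Lift_tperm odd_permM !odd_tperm.
by rewrite !(inj_eq evn_inj) !(inj_eq odn_inj) addbb.
Qed.
End Lift.

Section Tblock.
Variables (R : comNzRingType) (n : nat) (b : 'I_n -> R) (Z : 'M[R]_n.*2).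
Hypothesis hZ1 : forall k, Z (evn k) (odn k) = b k.
Hypothesis hZa : forall i j, Z j i = - Z i j.
Hypothesis hZ0 : forall i j, half_ord i != half_ord j -> Z i j = 0.

Definition good (s : 'S_n.*2) := [forall k, half_ord (s (evn k)) == half_ord (s (odn k))].
Definition tt_ (s : 'S_n.*2) := (-1) ^+ s * \prod_(k < n) Z (s (evn k)) (s (odn k)).

Lemma tt_bad s : ~~ good s -> tt_ s = 0.
Proof.
case/forallPn => k hk; rewrite /tt_ (bigD1 k) //= hZ0 // mul0r mulr0 //.
Qed.

Lemma tt_swap s k : tt_ (tperm (evn k) (odn k) * s)%g = tt_ s.
Proof.
rewrite /tt_ odd_mul_tperm evn_odn addTb signrN.
rewrite (bigD1 k) //= [in RHS](bigD1 k) //= !permM tpermL tpermR hZa.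
rewrite mulNr mulNr mulrN opprK; congr (_ * (_ * _)).
apply: eq_bigr => l lk; rewrite !permM !tpermD //; by [rewrite evn_odn | rewrite eq_sym evn_odn | rewrite (inj_eq (@odn_inj n)) eq_sym | rewrite (inj_eq (@evn_inj n)) eq_sym].
Qed.

Lemma half_parity (i j : 'I_n.*2) : half_ord i = half_ord j -> i != j -> odd j = ~~ odd i.
Proof.
move=> hh ij; case oi: (odd i); case oj: (odd j) => //=.
- by move: ij; rewrite -eq_half ?oi ?oj // hh eqxx.
- by move: ij; rewrite -eq_half ?oi ?oj // hh eqxx.
Qed.

Lemma tt_lift s : good s -> (forall k, odd (s (evn k)) = false) -> tt_ s = \prod_k b k.
Proof.
move=> gs ev.
have hs : forall k, half_ord (s (evn k)) = half_ord (s (odn k)).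
  by move=> k; apply/eqP; move/forallP: gs.
pose sig k := half_ord (s (evn k)).
have sig_inj : injective sig.
  move=> k l /eqP; rewrite /sig eq_half ?ev // (inj_eq perm_inj) (inj_eq (@evn_inj n)).
  by move/eqP.
pose σ := perm sig_inj.
have se : forall k, s (evn k) = evn (σ k).
  by move=> k; rewrite permE /sig evn_half // ev.
have so : forall k, s (odn k) = odn (σ k).
  move=> k; rewrite permE /sig hs odn_half //.
  rewrite (half_parity (hs k)) ?ev // (inj_eq perm_inj) evn_odn //.
have sL : s = Lift σ.
  apply/permP => i; rewrite LiftE /liftf; case oi: (odd i).
    by rewrite -so odn_half ?oi.
  by rewrite -se evn_half ?oi.
rewrite /tt_ {1}sL odd_Lift expr0 mul1r.
rewrite (eq_bigr (fun k => b (σ k))); last by move=> k _; rewrite se so hZ1.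
by rewrite [RHS](reindex_inj (@perm_inj _ σ)).
Qed.

Lemma tt_good s : good s -> tt_ s = \prod_k b k.
Proof.
move: {2}#|[set k | odd (s (evn k))]| (leqnn #|[set k | odd (s (evn k))]|) => m.
elim: m s => [|m IH] s hm gs.
  apply: tt_lift => // k; apply/negbTE; apply: contraL hm => ok.
  by rewrite -ltnNge card_gt0; apply/set0Pn; exists k; rewrite inE.
have [k ok | ev] := pickP (fun k => odd (s (evn k))); last first.
  by apply: tt_lift.
rewrite -(tt_swap s k); apply: IH.
- have hs : half_ord (s (evn k)) = half_ord (s (odn k)) by apply/eqP; move/forallP: gs.
  have oo : odd (s (odn k)) = false.
    by rewrite (half_parity hs) ?ok // (inj_eq perm_inj) evn_odn.
  rewrite -ltnS; apply: leq_trans hm.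
  rewrite [X in (_ < X)%N](cardD1 k) inE ok add1n ltnS.
  apply: subset_leq_card; apply/subsetP => l; rewrite !inE !permM.
  case: (eqVneq l k) => [->|lk]; first by rewrite tpermL oo.
  by rewrite tpermD // ?(inj_eq (@evn_inj n)) 1?eq_sym ?evn_odn.
- apply/forallP => l; rewrite !permM.
  case: (eqVneq l k) => [->|lk].
    by rewrite tpermL tpermR eq_sym; move/forallP: gs => /(_ k).
  rewrite !tpermD //; try by [rewrite evn_odn | rewrite eq_sym evn_odn | rewrite (inj_eq (@odn_inj n)) eq_sym | rewrite (inj_eq (@evn_inj n)) eq_sym].
  by move/forallP: gs => /(_ l).
Qed.

Lemma Tpf_block : Tpf Z = (\sum_(s : 'S_n.*2) (good s)%:R) * \prod_k b k.
Proof.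
rewrite /Tpf mulr_suml; apply: eq_bigr => s _.
case gs: (good s); first by rewrite mul1r -(tt_good gs).
by rewrite mul0r -/(tt_ s) tt_bad ?gs.
Qed.

Lemma good1 : good 1%g.
Proof. by apply/forallP => k; rewrite !perm1 half_evn half_odn. Qed.
End Tblock.

Lemma char_poly_sim (R : comNzRingType) n (U W A : 'M[R]_n) :
  U *m W = 1%:M -> char_poly (U *m A *m W) = char_poly A.
Proof.
move=> UW.
pose U' := map_mx (@polyC R) U; pose W' := map_mx (@polyC R) W.
have UW' : U' *m W' = 1%:M by rewrite -map_mxM UW map_scalar_mx.
have E : char_poly_mx (U *m A *m W) = U' *m char_poly_mx A *m W'.
  rewrite /char_poly_mx !map_mxM mulmxBr mulmxBl -/U' -/W'.
  by rewrite mul_mx_scalar -scalemxAl UW' scalemx1.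
rewrite /char_poly E !det_mulmx mulrC mulrA -det_mulmx.
by rewrite (mulmx1C UW') det1 mul1r.
Qed.

Section Ilv.
Variable N : nat.

Definition unilv (i : 'I_N.*2) : 'I_(N + N) :=
  if odd i then rshift N (half_ord i) else lshift N (half_ord i).

Lemma ilv_unilv i : ilv (unilv i) = i.
Proof.
rewrite /unilv /ilv; case oi: (odd i).
- have -> : split (rshift N (half_ord i)) = inr (half_ord i) by exact: (unsplitK (inr _)).
  by rewrite odn_half ?oi.
- have -> : split (lshift N (half_ord i)) = inl (half_ord i) by exact: (unsplitK (inl _)).
  by rewrite evn_half ?oi.
Qed.

Lemma ilv_inj : injective (@ilv N).
Proof.
move=> a b; rewrite /ilv -{2}(splitK a) -{2}(splitK b).
case: (split a) => k; case: (split b) => l /=.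
- by move/evn_inj ->.
- by move=> h; move: (evn_odn k l); rewrite h eqxx.
- by move=> h; move: (evn_odn l k); rewrite h eqxx.
- by move/odn_inj ->.
Qed.

Lemma sum_ilvl (R : nzRingType) (F : 'I_(N + N) -> R) i :
  \sum_a (i == ilv a)%:R * F a = F (unilv i).
Proof.
rewrite (bigD1 (unilv i)) //= ilv_unilv eqxx mul1r big1 ?addr0 // => a ai.
case: eqP => [h|_]; last by rewrite mul0r.
by exfalso; move/eqP: ai; apply; apply: ilv_inj; rewrite ilv_unilv h.
Qed.

Lemma sum_ilvr (R : nzRingType) (F : 'I_(N + N) -> R) i :
  \sum_a F a * (i == ilv a)%:R = F (unilv i).
Proof.
rewrite -(sum_ilvl F); apply: eq_bigr => a _.
by case: eqP; rewrite ?mulr0 ?mul0r ?mulr1 ?mul1r.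
Qed.

Lemma Amx_entry (C : numClosedFieldType) (AA AAt DD : 'M[C]_N) i j :
  Amx AA AAt DD i j = block_mx AA ('i *: DD) (- ('i *: DD)) AAt (unilv i) (unilv j).
Proof.
rewrite /Amx mxE.
under eq_bigr do rewrite mxE.
transitivity (\sum_b (\sum_a (i == ilv a)%:R * block_mx AA ('i *: DD) (- ('i *: DD)) AAt a b) * (j == ilv b)%:R).
  by apply: eq_bigr => b _; congr (_ * _); [apply: eq_bigr => a _; rewrite !mxE | rewrite mxE].
under eq_bigr do rewrite sum_ilvl.
by rewrite sum_ilvr.
Qed.
End Ilv.

Section Conj.
Variables (C : numClosedFieldType) (N : nat) (AA AAt DD : 'M[C]_N).
Hypotheses (hAA : forall i j, AA i j \is Num.real) (hAAt : forall i j, AAt i j \is Num.real)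
  (hDD : forall i j, DD i j \is Num.real).

Definition sgnrow : 'rV[C]_N.*2 := \row_i (-1) ^+ odd i.

Lemma Amx_conj :
  map_mx Num.Def.conjC (Amx AA AAt DD) = diag_mx sgnrow *m Amx AA AAt DD *m diag_mx sgnrow.
Proof.
have AE : Amx AA AAt DD = \matrix_(i, j)
   (if odd i then (if odd j then AAt (half_ord i) (half_ord j) else - ('i * DD (half_ord i) (half_ord j)))
    else (if odd j then 'i * DD (half_ord i) (half_ord j) else AA (half_ord i) (half_ord j))).
  apply/matrixP => i j; rewrite [RHS]mxE Amx_entry /unilv.
  by case: (odd i); case: (odd j);
    rewrite ?block_mxEul ?block_mxEur ?block_mxEdl ?block_mxEdr ?mxE.
rewrite AE; apply/matrixP => i j; rewrite mul_mx_diag mul_diag_mx !mxE.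
case oi: (odd i); case oj: (odd j) => /=.
- by rewrite conj_Creal // expr1 mulN1r mulrN1 opprK.
- by rewrite rmorphN rmorphM /= conjCi (conj_Creal (hDD _ _)) expr1 expr0 mulN1r mulr1 mulNr.
- by rewrite rmorphM /= conjCi (conj_Creal (hDD _ _)) expr1 expr0 mul1r mulrN1 mulNr.
- by rewrite conj_Creal // expr0 mul1r mulr1.
Qed.

Lemma char_poly_real :
  map_poly Num.Def.conjC (char_poly (Amx AA AAt DD)) = char_poly (Amx AA AAt DD).
Proof.
rewrite map_char_poly Amx_conj char_poly_sim //.
rewrite mulmx_diag; apply/matrixP => i j; rewrite !mxE.
by rewrite -expr2 sqrr_sign.
Qed.
End Conj.

Section Pos.
Variable C : numClosedFieldType.

Lemma perm_swap2 (T : eqType) (a b : T) s : perm_eq (a :: b :: s) (b :: a :: s).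
Proof. by rewrite -[a :: _]/([:: a] ++ [:: b] ++ s) perm_catCA. Qed.

Lemma prod_conj_pos (r : seq C) :
  all (fun z => 0 < 'Re z) r -> perm_eq (map (fun z => z^*) r) r -> 0 < \prod_(z <- r) z.
Proof.
move: {2}(size r) (leqnn (size r)) => m; elim: m r => [|m IH] [|x r] //=; rewrite ?big_nil ?ltr01 //.
move=> hs /andP[xpos rpos] hp; rewrite big_cons.
have x0 : x != 0 by apply: contraTneq xpos => ->; rewrite (ReE 0) rmorph0 addr0 mul0r ltxx.
case: (eqVneq x^* x) => hx.
- have xr : x \is Num.real by rewrite CrealE hx.
  have -> : x = 'Re x by move/Creal_ReP: xr.
  apply: mulr_gt0 => //; apply: IH => //.
  by move: hp; rewrite hx perm_cons.
- have xc : x^* \in r.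
    have : x^* \in map (fun z => z^*) (x :: r) by rewrite map_f // mem_head.
    by rewrite (perm_mem hp) in_cons (negbTE hx).
  have hr := perm_to_rem xc.
  set r2 := rem x^* r in hr.
  rewrite (perm_big _ hr) big_cons mulrA.
  apply: mulr_gt0; first by rewrite mul_conjC_gt0.
  apply: IH.
  + by move: hs; rewrite (perm_size hr) /= ltnS => /ltnW.
  + by apply/allP => z zr2; apply: (allP rpos); rewrite (perm_mem hr) in_cons zr2 orbT.
  + have e1 : perm_eq (x^* :: map (fun z => z^*) r) (x^* :: x :: map (fun z => z^*) r2).
      by rewrite perm_cons; have := perm_map (fun z => z^*) hr; rewrite /= conjCK.
    have e2 : perm_eq (x :: r) (x^* :: x :: r2).
      by apply: perm_trans (perm_swap2 _ _ _); rewrite perm_cons.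
    rewrite perm_sym in e1.
    by have := perm_trans (perm_trans e1 hp) e2; rewrite !perm_cons.
Qed.
End Pos.

Section Part2.
Variables (C : numClosedFieldType) (N : nat) (beta : 'I_N -> C).

Let Z := 'i *: Bmx beta.

Lemma Z1 k : Z (evn k) (odn k) = beta k.
Proof.
rewrite /Z !mxE half_evn half_odn eqxx odd_evn odd_odn /=.
by rewrite mulrN mulrA -expr2 sqrCi mulN1r opprK.
Qed.

Lemma Za i j : Z j i = - Z i j.
Proof.
rewrite /Z !mxE [half_ord j == _]eq_sym.
case: eqP => [h|_]; last by rewrite !mulr0 oppr0.
rewrite h; case: (odd i); case: (odd j) => /=; by rewrite ?mulr0 ?oppr0 ?mulrN ?opprK.
Qed.

Lemma Z0 i j : half_ord i != half_ord j -> Z i j = 0.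
Proof. by move=> h; rewrite /Z !mxE (negbTE h) mulr0. Qed.

Lemma Tpf_Z : Tpf Z = (\sum_(s : 'S_N.*2) (good s)%:R) * \prod_k beta k.
Proof. exact: Tpf_block Z1 Za Z0. Qed.

Lemma K0_gt0 : 0 < \sum_(s : 'S_N.*2) (good s)%:R :> C.
Proof.
rewrite (bigD1 1%g) //= good1; apply: lt_le_trans (ltr01) _.
by rewrite lerDl sumr_ge0 // => s _; exact: ler0n.
Qed.
End Part2.

Section Part2b.
Variables (C : numClosedFieldType) (N : nat) (beta : 'I_N -> C) (A : 'M[C]_N.*2).
Hypothesis hreal : map_poly Num.Def.conjC (char_poly A) = char_poly A.
Hypothesis hchar : char_poly A =
           \prod_(k < N) (('X - (beta k)%:P) * ('X + (beta k)%:P)).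
Hypothesis hbetaRe : forall k, 0 <= 'Re (beta k).
Hypothesis hbetaIm : forall k, 'Re (beta k) = 0 -> 0 < 'Im (beta k).

Let E := index_enum 'I_N.
Let s := map beta E ++ map (fun k => - beta k) E.
Let pos (z : C) := 0 < 'Re z.

Lemma ReN (z : C) : 'Re (- z) = - 'Re z.
Proof. by rewrite !ReE rmorphN -opprD mulNr. Qed.

Lemma char_s : char_poly A = \prod_(z <- s) ('X - z%:P).
Proof.
rewrite hchar big_split /= big_cat /= !big_map; congr (_ * _).
by apply: eq_bigr => k _; rewrite polyCN opprK.
Qed.

Lemma perm_s : perm_eq (map (fun z => z^*) s) s.
Proof.
apply: prod_XsubC_eq; rewrite -char_s -[in RHS]hreal char_s.
by rewrite map_prod_XsubC big_map.
Qed.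

Let r := map beta [seq k <- E | 'Re (beta k) != 0].

Lemma filter_s : filter pos s = r.
Proof.
rewrite filter_cat.
have -> : filter pos (map (fun k => - beta k) E) = [::].
  rewrite -(filter_pred0 (map (fun k => - beta k) E)); apply: eq_in_filter.
  move=> z /mapP[k _ ->]; rewrite /pos /= ReN oppr_gt0; apply/negP => /lt_le_trans /(_ (hbetaRe k)); by rewrite ltxx.
rewrite cats0 filter_map /r; congr map; apply: eq_filter => k /=.
by rewrite /pos lt0r hbetaRe andbT.
Qed.

Lemma perm_r : perm_eq (map (fun z => z^*) r) r.
Proof.
rewrite -filter_s.
have := perm_filter pos perm_s; rewrite filter_map.
have -> : filter (preim (fun z => z^*) pos) s = filter pos s.
  by apply: eq_filter => z /=; rewrite /pos Re_conj.
done.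
Qed.

Lemma prod_beta_pos :
  0 < (- 'i) ^+ #|[set k : 'I_N | 'Re (beta k) == 0]| * \prod_k beta k.
Proof.
rewrite (bigID (fun k => 'Re (beta k) == 0)) /= mulrA.
have -> : (- 'i) ^+ #|[set k : 'I_N | 'Re (beta k) == 0]| = \prod_(k | 'Re (beta k) == 0) (- 'i : C).
  by rewrite -prodr_const; apply: eq_bigl => k; rewrite inE.
rewrite -big_split /=; apply: mulr_gt0.
  apply: prodr_gt0 => k /eqP h.
  rewrite {1}(Crect (beta k)) h add0r mulrA mulNr -expr2 sqrCi opprK mul1r.
  exact: hbetaIm.
have -> : \prod_(k | 'Re (beta k) != 0) beta k = \prod_(z <- r) z.
  by rewrite /r big_map big_filter.
apply: prod_conj_pos; last exact: perm_r.
apply/allP => z /mapP[k]; rewrite mem_filter => /andP[hk _] ->.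
by rewrite lt0r hk hbetaRe.
Qed.
End Part2b.

Lemma part2 (C : numClosedFieldType) (N : nat) (AA AAt DD : 'M[C]_N)
  (hAAreal : forall i j, AA i j \is Num.real)
  (hAAtreal : forall i j, AAt i j \is Num.real)
  (hDDreal : forall i j, DD i j \is Num.real)
  (beta : 'I_N -> C)
  (hchar : char_poly (Amx AA AAt DD) =
           \prod_(k < N) (('X - (beta k)%:P) * ('X + (beta k)%:P)))
  (hbetaRe : forall k, 0 <= 'Re (beta k))
  (hbetaIm : forall k, 'Re (beta k) = 0 -> 0 < 'Im (beta k))
  (O : 'M[C]_N.*2)
  (hO1 : O *m O^T = 1%:M)
  (hAOB : Amx AA AAt DD = O^T *m Bmx beta *m O) :
  (let I := #|[set k : 'I_N | 'Re (beta k) == 0]| in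
   let x := (- 'i) ^+ I * pfaffian ('i *: Amx AA AAt DD) in
   x \is Num.real /\ \det O = Num.sg x).
Proof.
move=> I x.
have hreal := char_poly_real hAAreal hAAtreal hDDreal.
have hy := prod_beta_pos hreal hchar hbetaRe hbetaIm.
set y := _ * _ in hy.
have hK := @K0_gt0 C N.
set K0 := \sum_(s : 'S_N.*2) _ in hK.
set c := ((2 ^ N * N`!)%:R : C).
have hc : 0 < c by rewrite ltr0n muln_gt0 expn_gt0 fact_gt0.
have hpf : pfaffian ('i *: Amx AA AAt DD) = c^-1 * (\det O * (K0 * \prod_k beta k)).
  rewrite hAOB scalemxAl scalemxAr.
  by rewrite -(Tpf_Z beta) -Tpf_congr.
have dd : \det O * \det O = 1.
  by have := congr1 determinant hO1; rewrite det_mulmx det_tr det1.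
have ex : x = \det O * ((c^-1 * K0) * y).
  by rewrite /x hpf /y; ring.
have : (\det O == 1) || (\det O == -1) by rewrite -sqrf_eq1 expr2 dd eqxx.
have hp : 0 < c^-1 * K0 * y by apply: mulr_gt0 => //; apply: mulr_gt0 => //; rewrite invr_gt0.
case/orP => /eqP hd; rewrite ex hd.
- by rewrite mul1r gtr0_real // gtr0_sg.
- by rewrite mulN1r realN gtr0_real // ltr0_sg // oppr_lt0.
Qed.


Unset Implicit Arguments.
Theorem mainTheorem1
  (C : numClosedFieldType) (N : nat) (hN : (1 <= N)%N)
  (AA AAt DD : 'M[C]_N)
  (hAAreal : forall i j, AA i j \is Num.real)
  (hAAtreal : forall i j, AAt i j \is Num.real)
  (hDDreal : forall i j, DD i j \is Num.real)
  (hAAanti : AA^T = - AA) (hAAtanti : AAt^T = - AAt)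
  (hDDdiag : is_diag_mx DD)
  (hdiag : diagonalizable (Amx AA AAt DD))
  (hnz : ~~ root (char_poly (Amx AA AAt DD)) 0)
  (beta : 'I_N -> C)
  (hchar : char_poly (Amx AA AAt DD) =
           \prod_(k < N) (('X - (beta k)%:P) * ('X + (beta k)%:P)))
  (hbetaRe : forall k, 0 <= 'Re (beta k))
  (hbetaIm : forall k, 'Re (beta k) = 0 -> 0 < 'Im (beta k))
  (O : 'M[C]_N.*2)
  (hO1 : O *m O^T = 1%:M) (hO2 : O^T *m O = 1%:M)
  (hAOB : Amx AA AAt DD = O^T *m Bmx beta *m O)
  (V : lmodType C) (form : V -> V -> C)
  (hform_lin : forall a u v w, form u (a *: v + w) = a * form u v + form u w)
  (hform_herm : forall u v, form v u = (form u v)^*)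
  (hform_pos : forall v, v != 0 -> 0 < form v v)
  (c ct : 'I_N -> V -> V)
  (hc_lin : forall j, linear (c j)) (hct_lin : forall j, linear (ct j))
  (hc_herm : forall j u v, form (c j u) v = form u (c j v))
  (hct_herm : forall j u v, form (ct j u) v = form u (ct j v))
  (hcc : forall i j v, c i (c j v) + c j (c i v) = (2 * (i == j)%:R) *: v)
  (hctct : forall i j v, ct i (ct j v) + ct j (ct i v) = (2 * (i == j)%:R) *: v)
  (hcct : forall i j v, c i (ct j v) + ct j (c i v) = 0)
  (m : nat) :
  (forall (nu : nat) (psi : V), psi != 0 ->
     parity_d O c ct psi = (-1) ^+ nu *: psi ->
     (physical c ct m psi <-> (-1) ^+ nu = \det O * (-1) ^+ m))
  /\
  (let I := #|[set k : 'I_N | 'Re (beta k) == 0]| in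
   let x := (- 'i) ^+ I * pfaffian ('i *: Amx AA AAt DD) in
   x \is Num.real /\ \det O = Num.sg x).

Proof.
split.
- move=> nu psi psi0 hd.
  exact: (part1 hc_lin hct_lin hcc hctct hcct hO1 m psi0 hd).
- exact: (part2 hAAreal hAAtreal hDDreal hchar hbetaRe hbetaIm hO1 hAOB).
Qed.
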